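(* For every $l\in\mathbb N$, the closure of the complex curve $\Gamma_l=\{P_l(\lambda,\mu^2)=0\}$ in $\mathbb{CP}^2\supset\mathbb C^2_{(\lambda,\mu)}$ intersects the line at infinity exactly at the points $(\lambda:\mu:0)$ with $\lambda/\mu\in\{l-1,l-3,\dots,-(l-1)\}$; that is, the asymptotic directions of the branches of $\Gamma_l$ at infinity correspond to the ratios $\lambda/\mu=l-1,l-3,\dots,-(l-1)$. In particular, the closure of $\Gamma_l$ does not contain the point of intersection of the $\lambda$-axis with the line at infinity.
   Context: For $l\in\mathbb N$ and $\mu\in\mathbb C$, $H_l$ is the tridiagonal $l\times l$ matrix with entries $H_{l;jj}=(1-j)(l-j+1)$, $H_{l;j,j+1}=\mu j$, $H_{l;j,j-1}=\mu(l-j+1)$, and $H_{l;ij}=0$ if $|i-j|\geq 2$; $\det(H_l+\lambda\,\mathrm{Id})$ is a polynomial of degree $l$ in $(\lambda,\mu^2)$, written $P_l(\lambda,\mu^2)$. *)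

(* Defs.v *)
From HB Require Import structures.
From mathcomp Require Import all_boot all_order all_algebra.
From mathcomp Require Import reals.
From mathcomp Require Import complex.
Set Implicit Arguments. Unset Strict Implicit. Unset Printing Implicit Defensive.
Import Order.TTheory GRing.Theory Num.Theory.
Local Open Scope ring_scope.

Section Defs.
Variable R : realType.
Local Notation C := (complex R).

(* The l x l tridiagonal matrix H_l (0-based indices: row i = paper's j-1):
   H_{jj} = (1-j)(l-j+1) = -(i (l-i)),
   H_{j,j+1} = mu j = mu (i+1),
   H_{j,j-1} = mu (l-j+1) = mu (l-i),  0 otherwise. *)
Definition Hmx (l : nat) (mu : C) : 'M[C]_l :=
  \matrix_(i < l, j < l)
    if j == i then - ((i * (l - i))%N)%:R
    else if (j : nat) == i.+1 then mu * (i.+1)%:R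
    else if (i : nat) == j.+1 then mu * (l - i)%:R
    else 0.

(* det(H_l + lambda Id), i.e. P_l(lambda, mu^2), as a function of (lambda, mu) *)
Definition Pl (l : nat) (lam mu : C) : C := \det (Hmx l mu + lam%:M).

Definition cabs (z : C) : R := Normc.normc z.
Definition cvgC (u : nat -> C) (a : C) : Prop :=
  forall eps : R, 0 < eps -> exists N : nat, forall n, (N <= n)%N -> cabs (u n - a) < eps.

(* The point (a : b : 0) of the line at infinity of CP^2 (with C^2 embedded as
   (lam, mu) |-> (lam : mu : 1)) lies in the (Euclidean) closure of
   Gamma_l = {P_l = 0}: it is the limit in CP^2 of points (lam_n : mu_n : 1)
   of Gamma_l, i.e. some homogeneous representatives (t_n lam_n : t_n mu_n : t_n)
   converge to (a, b, 0). Meaningful for (a, b) <> (0, 0). *)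
Definition closure_at_infinity (l : nat) (a b : C) : Prop :=
  exists (lam mu t : nat -> C),
    (forall n, Pl l (lam n) (mu n) = 0) /\
    (forall n, t n != 0) /\
    cvgC t 0 /\
    cvgC (fun n => t n * lam n) a /\
    cvgC (fun n => t n * mu n) b.

End Defs.

(* Main.v *)
Require Import Defs.
From HB Require Import structures.
From mathcomp Require Import all_boot all_order all_algebra.
From mathcomp Require Import reals.
From mathcomp Require Import complex.
From mathcomp Require Import ring lra zify.
From Stdlib Require Import IndefiniteDescription.
Set Implicit Arguments. Unset Strict Implicit. Unset Printing Implicit Defensive.
Import Order.TTheory GRing.Theory Num.Theory.
Local Open Scope ring_scope.

Section S.
Variable R : realType.
Local Notation C := (complex R).

Lemma exp_pred (x : {poly C}) a : x * x ^+ a.-1 *+ a = x ^+ a *+ a.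
Proof. by case: a => [|a] //=; rewrite exprS. Qed.

Lemma eig_poly (a b : nat) :
  let h := ('X + 1%:P) ^+ a * ('X - 1%:P) ^+ b : {poly C} in
  h^`() - 'X * ('X * h^`()) + ('X * h) *+ (a + b) = h *+ a - h *+ b.
Proof.
move=> h.
have E : h^`() - 'X * ('X * h^`()) = - (('X + 1%:P) * ('X - 1%:P)) * h^`().
  rewrite polyC1; ring.
rewrite E /h derivM !deriv_exp derivD derivX derivC addr0 derivXsubC.
have Ea := exp_pred ('X + 1%:P) a.
have Eb := exp_pred ('X - 1%:P) b.
set u := 'X + 1%:P in Ea *; set w := 'X - 1%:P in Eb *.
have -> : - (u * w) * (1 * u ^+ a.-1 *+ a * w ^+ b + u ^+ a * (1 * w ^+ b.-1 *+ b))
   = - ((u * u ^+ a.-1 *+ a) * (w * w ^+ b)) - ((w * w ^+ b.-1 *+ b) * (u * u ^+ a)).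
  ring.
rewrite Ea Eb.
have Hx : 'X = u - 1 by rewrite /u polyC1; ring.
have Hw : w = u - 1 - 1 by rewrite /w /u polyC1; ring.
rewrite Hw Hx; ring.
Qed.



Lemma coefT' (h : {poly C}) n j : (j <= n)%N ->
  (h^`() - 'X * ('X * h^`()) + ('X * h) *+ n) `_j =
  h`_j.+1 *+ j.+1 + (if j is j'.+1 then h`_j' *+ (n.+1 - j) else 0).
Proof.
move=> jn.
rewrite coefD coefB coefMn !coefXM coef_deriv.
case: j jn => [|j] jn /=; first by rewrite subr0 mul0rn.
case: j jn => [|j] jn /=; first by rewrite subr0 subn1 /=.
rewrite coef_deriv.
have -> : (n.+1 - j.+2)%N = (n - j.+1)%N by [].
have -> : h`_j.+1 *+ n = h`_j.+1 *+ j.+1 + h`_j.+1 *+ (n - j.+1).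
  by rewrite -mulrnDr subnKC // ltnW.
by rewrite addrA subrK.
Qed.


Definition Jm l : 'M[C]_l := \matrix_(i < l, j < l)
  if j == i then 0
  else if (j : nat) == i.+1 then (i.+1)%:R
  else if (i : nat) == j.+1 then (l - i)%:R
  else 0.

Definition Dm l : 'M[C]_l := \matrix_(i < l, j < l)
  if j == i then - ((i * (l - i))%N)%:R else 0.

Lemma HmxE l mu : Hmx l mu = Dm l + mu *: Jm l.
Proof.
apply/matrixP => i j; rewrite !mxE.
case: eqP => _; first by rewrite mulr0 addr0.
rewrite add0r; case: eqP => _ //; case: eqP => _ //; by rewrite mulr0.
Qed.

Lemma sum_pick (f : nat -> C) m l :
  \sum_(i < l) (if (i : nat) == m then f i else 0) = if (m < l)%N then f m else 0.
Proof.
elim: l => [|l IH]; first by rewrite big_ord0.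
rewrite big_ord_recr /= IH.
case: (ltngtP m l) => [ml|lm|<-].
- by rewrite addr0 ltnS (ltnW ml).
- by rewrite addr0 ltnS leqNgt lm.
- by rewrite add0r ltnSn.
Qed.

Lemma Jm_term l (h : {poly C}) (i j : 'I_l) :
  h`_i * Jm l j i =
  (if (i : nat) == j.+1 then h`_i *+ j.+1 else 0) +
  (if (i : nat) == j.-1 then (if (0 < j)%N then h`_i *+ (l - j) else 0) else 0).
Proof.
rewrite mxE; case: i => i Hi; case: j => j Hj /=.
rewrite -[Ordinal Hi == Ordinal Hj]/(i == j).
repeat (case: eqP => ?); subst; try lia; rewrite ?mulr0 ?addr0 ?add0r ?mulr_natr //.
match goal with H : ?j = ?j.-1 |- _ => have -> : (0 < j)%N = false by lia end; done.
Qed.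


Lemma Jm_sum l (h : {poly C}) (j : 'I_l) : (size h <= l)%N ->
  \sum_(i < l) h`_i * Jm l j i =
  h`_j.+1 *+ j.+1 + (if (j : nat) is j'.+1 then h`_j' *+ (l - j) else 0).
Proof.
move=> sh.
under eq_bigr => i _ do rewrite Jm_term.
rewrite big_split /=.
rewrite (sum_pick (fun i => h`_i *+ j.+1)).
rewrite (sum_pick (fun i => if (0 < j)%N then h`_i *+ (l - j) else 0)).
have -> : (j.-1 < l)%N by case: j => [[|j]] //= Hj; apply: ltnW.
congr (_ + _).
  case: ifP => // /negbT; rewrite -leqNgt => lj.
  by rewrite nth_default ?mul0rn // (leq_trans sh).
by case: j => [[|j]].
Qed.


Definition ev l k : C := (l.-1)%:R - (2 * k)%:R.

Lemma Jm_eig l k : (k < l)%N -> \det ((ev l k)%:M - Jm l) = 0.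
Proof.
move=> kl.
set n := l.-1.
have ln : l = n.+1 by rewrite /n prednK // (leq_ltn_trans _ kl).
have kn : (k <= n)%N by rewrite -ltnS -ln.
pose h : {poly C} := ('X + 1%:P) ^+ (n - k) * ('X - 1%:P) ^+ k.
have XE : 'X + 1%:P = 'X - (-1)%:P :> {poly C} by rewrite polyCN opprK.
have sh : (size h <= l)%N.
  apply: leq_trans (size_mul_leq _ _) _.
  rewrite XE !size_exp_XsubC ln /= addnS subnK //.
have h0 : h != 0.
  by apply: monic_neq0; rewrite monicMl ?monic_exp ?monicXsubC // XE monicXsubC.
pose v : 'rV[C]_l := \row_(j < l) h`_j.
have v0 : v != 0.
  apply: contra h0 => /eqP v0; apply/eqP/polyP => i; rewrite coef0.
  case: (ltnP i l) => il; last by rewrite nth_default // (leq_trans sh).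
  by have := congr1 (fun M : 'rV[C]_l => M 0 (Ordinal il)) v0; rewrite !mxE.
rewrite -det_tr; apply/eqP/det0P; exists v => //.
rewrite linearB /= tr_scalar_mx mulmxBr mul_mx_scalar; apply/matrixP => i j.
rewrite mxE [(ev l k *: v) i j]mxE mxE mxE mxE [(0 : 'rV[C]_l) i j]mxE.
have E : forall j0, v i j0 * (Jm l)^T j0 j = h`_j0 * Jm l j j0.
  by move=> j0; rewrite [v _ _]mxE [(Jm l)^T _ _]mxE.
under eq_bigr => j0 _ do rewrite E.
rewrite Jm_sum //.
have := congr1 (fun p : {poly C} => p`_j) (eig_poly (n - k) k).
rewrite -/h subnK // coefT' ?(leq_trans (ltn_ord j)) -?ln //.
rewrite coefB !coefMn => ->.
rewrite /ev -/n mulrnBr // natrM; ring.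
by rewrite -ltnS -ln.
Qed.


Lemma horner_char n (A : 'M[C]_n) x : (char_poly A).[x] = \det (x%:M - A).
Proof.
rewrite /char_poly -horner_evalE -det_map_mx; congr (determinant _).
apply/matrixP => i j; rewrite !mxE.
by rewrite rmorphB rmorphMn /= !horner_evalE hornerX hornerC.
Qed.

Lemma ev_inj l : injective (ev l).
Proof.
move=> k1 k2; rewrite /ev => /addrI /oppr_inj /eqP; rewrite eqr_nat => /eqP; lia.
Qed.

Lemma Jm_root l x : \det (x%:M - Jm l) = 0 -> exists2 k, (k < l)%N & x = ev l k.
Proof.
move=> dx.
set rs := [seq ev l k | k <- iota 0 l].
case: (boolP (x \in rs)) => [/mapP [k] | xn].
  by rewrite mem_iota add0n => kl ->; exists k.
have p0 : char_poly (Jm l) != 0 by apply: monic_neq0; apply: char_poly_monic.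
have := max_poly_roots p0 (rs := x :: rs).
rewrite size_char_poly /= size_map size_iota ltnn.
move=> H; exfalso; apply/negP: isT; apply: H.
  apply/andP; split; first by rewrite /root horner_char dx.
  apply/allP => y /mapP [k].
  by rewrite mem_iota add0n => kl ->; rewrite /root horner_char Jm_eig.
by rewrite xn (map_inj_uniq (@ev_inj l)) iota_uniq.
Qed.


Lemma ev_neg l k : (k < l)%N -> ev l (l.-1 - k) = - ev l k.
Proof.
move=> kl; have kn : (k <= l.-1)%N by case: l kl.
rewrite /ev !natrM natrB //; ring.
Qed.

Lemma M1 l (a b : C) : (a, b) != (0, 0) ->
  (\det (a%:M + b *: Jm l) = 0 <->
   (b != 0 /\ exists2 k : nat, (k < l)%N & a = b * ((l.-1)%:R - (2 * k)%:R))).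
Proof.
move=> ab.
move: ab; have [-> | b0] := eqVneq b 0 => ab.
  have a0 : a != 0 by apply: contraNneq ab => ->.
  rewrite scale0r addr0 det_scalar; split => [/eqP | []//].
  by rewrite expf_eq0 (negbTE a0) andbF.
have -> : a%:M + b *: Jm l = (- b) *: ((- a / b)%:M - Jm l).
  rewrite scalerBr scale_scalar_mx scaleNr opprK; congr (_%:M + _).
  by field.
rewrite detZ; split.
  move/eqP; rewrite mulf_eq0 expf_eq0 oppr_eq0 (negbTE b0) andbF /= => /eqP.
  case/Jm_root => k kl E; split => //; exists (l.-1 - k)%N.
    by case: l kl {E} => // l; lia.
  rewrite -/(ev l _) ev_neg // -E; field.
  by [].
case=> _ [k kl E].
have kl' : (l.-1 - k < l)%N by case: l kl {E} => // l; lia.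
have -> : - a / b = ev l (l.-1 - k) by rewrite ev_neg // E -/(ev l k); field.
by rewrite Jm_eig // mulr0.
Qed.

End S.

Arguments Jm {R} l.
Arguments Dm {R} l.
Arguments ev {R} l k.

Section S2.
Variable R : realType.
Local Notation C := (complex R).
Implicit Types (u v : nat -> C) (a b : C).

Lemma cabs_ge0 (z : C) : 0 <= cabs z.
Proof. by case: z => x y; rewrite /cabs /= sqrtr_ge0. Qed.

Lemma cabsD (x y : C) : cabs (x + y) <= cabs x + cabs y.
Proof. exact: le_normcD. Qed.

Lemma cabsM (x y : C) : cabs (x * y) = cabs x * cabs y.
Proof. exact: Normc.normcM. Qed.

Lemma cabsN (x : C) : cabs (- x) = cabs x.
Proof. exact: normcN. Qed.

Lemma cabs0 : cabs (0 : C) = 0.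
Proof. exact: Normc.normc0. Qed.

Lemma cabs_eq0 (x : C) : cabs x = 0 -> x = 0.
Proof. exact: Normc.eq0_normc. Qed.

Lemma cabs_nat k : cabs (k%:R : C) = k%:R.
Proof. by rewrite /cabs normcMn Normc.normc1. Qed.

Lemma cabsV (x : C) : cabs x^-1 = (cabs x)^-1.
Proof. exact: Normc.normcV. Qed.

Lemma cvg_ext u v a : (forall n, u n = v n) -> cvgC u a -> cvgC v a.
Proof.
move=> E H e e0; have [N HN] := H e e0; exists N => n nN; rewrite -E; exact: HN.
Qed.

Lemma cvg_cst a : cvgC (fun _ => a) a.
Proof. by move=> e e0; exists 0%N => n _; rewrite subrr cabs0. Qed.

Lemma cvg_add u v a b : cvgC u a -> cvgC v b -> cvgC (fun n => u n + v n) (a + b).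
Proof.
move=> Hu Hv e e0.
have e2 : 0 < e / 2 by rewrite divr_gt0.
have [N1 H1] := Hu _ e2; have [N2 H2] := Hv _ e2.
exists (maxn N1 N2) => n; rewrite geq_max => /andP [n1 n2].
have := H1 _ n1; have := H2 _ n2.
have -> : u n + v n - (a + b) = (u n - a) + (v n - b) by ring.
have := cabsD (u n - a) (v n - b); lra.
Qed.

Lemma cvg_mul u v a b : cvgC u a -> cvgC v b -> cvgC (fun n => u n * v n) (a * b).
Proof.
move=> Hu Hv e e0.
set K := 1 + cabs a + cabs b.
have K0 : 0 < K by have := cabs_ge0 a; have := cabs_ge0 b; rewrite /K; lra.
set d := Num.min 1 (e / (2 * K)).
have d0 : 0 < d by rewrite lt_min ltr01 /= divr_gt0 // mulr_gt0.
have d1 : d <= 1 by rewrite ge_min lexx.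
have dK : d * (2 * K) <= e.
  by rewrite -ler_pdivlMr ?mulr_gt0 // ge_min lexx orbT.
have [N1 H1] := Hu _ d0; have [N2 H2] := Hv _ d0.
exists (maxn N1 N2) => n; rewrite geq_max => /andP [n1 n2].
have h1 := H1 _ n1; have h2 := H2 _ n2.
have -> : u n * v n - a * b = (u n - a) * (v n - b) + (a * (v n - b) + b * (u n - a)) by ring.
have := cabsD ((u n - a) * (v n - b)) (a * (v n - b) + b * (u n - a)).
have := cabsD (a * (v n - b)) (b * (u n - a)).
rewrite !cabsM.
have := cabs_ge0 (u n - a); have := cabs_ge0 (v n - b).
have := cabs_ge0 a; have := cabs_ge0 b.
move: h1 h2 dK d1 d0 K0; rewrite /K.
set x := cabs (u n - a); set y := cabs (v n - b); set A := cabs a; set B := cabs b.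
move=> *; nra.
Qed.


Lemma cvg_sum (I : Type) (r : seq I) (P : pred I) (F : I -> nat -> C) (f : I -> C) :
  (forall i, cvgC (F i) (f i)) ->
  cvgC (fun n => \sum_(i <- r | P i) F i n) (\sum_(i <- r | P i) f i).
Proof.
move=> H; elim: r => [|x r IH].
  by rewrite big_nil; apply: cvg_ext (cvg_cst 0) => n; rewrite big_nil.
rewrite big_cons; case: (boolP (P x)) => Px.
  by apply: cvg_ext (cvg_add (H x) IH) => n; rewrite big_cons Px.
by apply: cvg_ext IH => n; rewrite big_cons (negbTE Px).
Qed.

Lemma cvg_prod (I : Type) (r : seq I) (P : pred I) (F : I -> nat -> C) (f : I -> C) :
  (forall i, cvgC (F i) (f i)) ->
  cvgC (fun n => \prod_(i <- r | P i) F i n) (\prod_(i <- r | P i) f i).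
Proof.
move=> H; elim: r => [|x r IH].
  by rewrite big_nil; apply: cvg_ext (cvg_cst 1) => n; rewrite big_nil.
rewrite big_cons; case: (boolP (P x)) => Px.
  by apply: cvg_ext (cvg_mul (H x) IH) => n; rewrite big_cons Px.
by apply: cvg_ext IH => n; rewrite big_cons (negbTE Px).
Qed.

Lemma cvg_det n (M : nat -> 'M[C]_n) (A : 'M[C]_n) :
  (forall i j, cvgC (fun k => M k i j) (A i j)) ->
  cvgC (fun k => \det (M k)) (\det A).
Proof.
move=> H; rewrite /determinant.
apply: cvg_sum => s; apply: cvg_mul; first exact: cvg_cst.
by apply: cvg_prod => i; apply: H.
Qed.

Lemma cvg_eq0 u a : (forall n, u n = 0) -> cvgC u a -> a = 0.
Proof.
move=> E H; apply/eqP; apply/negP => /negP a0.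
have ca : 0 < cabs a.
  by rewrite lt_def cabs_ge0 andbT; apply/eqP => /cabs_eq0 /eqP; apply/negP.
have [N HN] := H _ ca; have := HN N (leqnn N); rewrite E sub0r cabsN ltxx //.
Qed.

Lemma archi (e : R) : 0 < e -> exists N : nat, (N.+1%:R)^-1 < e.
Proof.
move=> e0.
have ie : 0 <= e^-1 by rewrite invr_ge0 ltW.
have := @archi_boundP R e^-1 ie.
set N := Num.bound _ => HN; exists N.
rewrite invf_plt ?posrE ?ltr0Sn //.
apply: lt_le_trans HN _; rewrite ler_nat; exact: leqnSn.
Qed.

Lemma cvg_small u a : (forall m, cabs (u m - a) <= (m.+1%:R)^-1) -> cvgC u a.
Proof.
move=> H e e0; have [N HN] := archi e0; exists N => m Nm.
apply: le_lt_trans (H m) _; apply: le_lt_trans HN.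
by rewrite lef_pV2 ?posrE ?ltr0Sn // ler_nat.
Qed.


Lemma prod_lb (rs : seq C) a (e : R) : 0 <= e ->
  (forall r, r \in rs -> e <= cabs (a - r)) ->
  e ^+ size rs <= cabs (\prod_(r <- rs) (a - r)).
Proof.
move=> e0; elim: rs => [|x rs IH] H.
  by rewrite big_nil expr0 /cabs Normc.normc1.
rewrite big_cons cabsM /= exprS.
apply: ler_pM => //; first exact: exprn_ge0.
  by apply: H; rewrite mem_head.
by apply: IH => r rin; apply: H; rewrite inE rin orbT.
Qed.

Lemma RL l (N : 'M[C]_l) a (e : R) : 0 < e -> cabs (\det (a%:M + N)) < e ^+ l ->
  exists z, \det (z%:M + N) = 0 /\ cabs (z - a) < e.
Proof.
move=> e0 Ha.
set p := char_poly (- N).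
have hp : forall z, p.[z] = \det (z%:M + N) by move=> z; rewrite horner_char opprK.
have [rs Hrs] := closed_field_poly_normal p.
have lc : lead_coef p = 1 by apply/monicP; apply: char_poly_monic.
rewrite lc scale1r in Hrs.
have srs : size rs = l.
  by have := size_char_poly (- N); rewrite -/p Hrs size_prod_XsubC => -[].
case: (boolP (has (fun r => cabs (r - a) < e) rs)).
  case/hasP => z zin hz; exists z; split => //.
  by rewrite -hp; apply/eqP; rewrite -/(root p z) Hrs root_prod_XsubC.
move/hasPn => H; exfalso.
have := @prod_lb rs a e (ltW e0).
have E : \det (a%:M + N) = \prod_(r <- rs) (a - r).
  by rewrite -hp Hrs horner_prod; apply: eq_bigr => r _; rewrite hornerXsubC.
rewrite srs -E.
move=> Hle; suff : false by [].
rewrite -(ltxx (e ^+ l)); apply: le_lt_trans (Hle _) Ha => r rin.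
by have := H r rin; rewrite /= -leNgt -cabsN opprB.
Qed.


Lemma Fdir l a b : closure_at_infinity l a b -> \det (a%:M + b *: Jm l) = 0.
Proof.
case=> lam [mu [t [HP [Ht [Ct [Cl Cm]]]]]].
pose M k : 'M[C]_l := \matrix_(i, j) (t k * Dm l i j +
   ((if i == j then t k * lam k else 0) + (t k * mu k) * Jm l i j)).
have HM : forall k, \det (M k) = 0.
  move=> k; have := HP k; rewrite /Pl => H.
  have -> : M k = t k *: (Hmx l (mu k) + (lam k)%:M).
    apply/matrixP => i j; rewrite HmxE !mxE; case: (i == j); rewrite ?mulr1n ?mulr0n; ring.
  by rewrite detZ H mulr0.
have Hc : forall i j, cvgC (fun k => M k i j) ((a%:M + b *: Jm l) i j).
  move=> i j.
  have -> : (a%:M + b *: Jm l) i j =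
     0 * Dm l i j + ((if i == j then a else 0) + b * Jm l i j).
    by rewrite !mxE; case: (i == j); rewrite ?mulr1n ?mulr0n; ring.
  apply: (@cvg_ext (fun k => t k * Dm l i j +
     ((if i == j then t k * lam k else 0) + (t k * mu k) * Jm l i j))).
    by move=> k; rewrite /M [in RHS]mxE.
  apply: cvg_add; first exact: cvg_mul Ct (cvg_cst _).
  apply: cvg_add; last exact: cvg_mul Cm (cvg_cst _).
  by case: (i == j); [exact: Cl | exact: cvg_cst].
exact: cvg_eq0 HM (cvg_det Hc).
Qed.

Lemma Bdir l a b : \det (a%:M + b *: Jm l) = 0 -> closure_at_infinity l a b.
Proof.
move=> H0.
pose N k : 'M[C]_l := (k.+1%:R)^-1 *: Dm l + b *: Jm l.
have Hc : cvgC (fun k => \det (a%:M + N k)) 0.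
  rewrite -H0; apply: cvg_det => i j.
  apply: (@cvg_ext (fun k => (k.+1%:R)^-1 * Dm l i j +
      ((if i == j then a else 0) + b * Jm l i j))).
    by move=> k; rewrite !mxE; case: (i == j); rewrite ?mulr1n ?mulr0n; ring.
  have -> : (a%:M + b *: Jm l) i j =
     0 * Dm l i j + ((if i == j then a else 0) + b * Jm l i j).
    by rewrite !mxE; case: (i == j); rewrite ?mulr1n ?mulr0n; ring.
  apply: cvg_add; last exact: cvg_cst.
  apply: cvg_mul; last exact: cvg_cst.
  by apply: cvg_small => m; rewrite subr0 cabsV cabs_nat.
have step : forall m, exists kz : nat * C, (m <= kz.1)%N /\
    \det (kz.2%:M + N kz.1) = 0 /\ cabs (kz.2 - a) < (m.+1%:R)^-1.
  move=> m.
  have e0 : 0 < (m.+1%:R : R)^-1 by rewrite invr_gt0 ltr0Sn.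
  have [K HK] := Hc _ (exprn_gt0 l e0).
  have := HK (maxn K m) (leq_maxl _ _); rewrite subr0 => H1.
  have [z [Hz1 Hz2]] := RL e0 H1.
  by exists (maxn K m, z); split; [exact: leq_maxr | split].
pose f m := proj1_sig (constructive_indefinite_description _ (step m)).
have Hf : forall m, (m <= (f m).1)%N /\
    \det ((f m).2%:M + N (f m).1) = 0 /\ cabs ((f m).2 - a) < (m.+1%:R)^-1.
  by move=> m; exact: (proj2_sig (constructive_indefinite_description _ (step m))).
exists (fun m => (f m).1.+1%:R * (f m).2), (fun m => (f m).1.+1%:R * b),
  (fun m => ((f m).1.+1%:R)^-1).
split; [|split; [|split; [|split]]].
- move=> m; have [_ [Hd _]] := Hf m; rewrite /Pl.
  set c : C := (f m).1.+1%:R.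
  have c0 : c != 0 by rewrite pnatr_eq0.
  have -> : Hmx l (c * b) + (c * (f m).2)%:M = c *: ((f m).2%:M + N (f m).1).
    apply/matrixP => i j; rewrite HmxE !mxE; case: (i == j); rewrite ?mulr1n ?mulr0n;
    by field; rewrite addrC natr1 pnatr_eq0.
  by rewrite detZ Hd mulr0.
- by move=> m; rewrite invr_eq0 pnatr_eq0.
- apply: cvg_small => m; rewrite subr0 cabsV cabs_nat.
  have [H _] := Hf m.
  by rewrite lef_pV2 ?posrE ?ltr0Sn // ler_nat.
- apply: (@cvg_ext (fun m => (f m).2)).
    by move=> m; rewrite mulrA mulVf ?pnatr_eq0 // mul1r.
  apply: cvg_small => m; have [_ [_ H]] := Hf m; exact: ltW H.
- apply: (@cvg_ext (fun _ => b)); last exact: cvg_cst.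
  by move=> m; rewrite mulrA mulVf ?pnatr_eq0 // mul1r.
Qed.

End S2.

Theorem proposition1p10 (R : realType) (l : nat) :
  (forall a b : complex R, (a, b) != (0, 0) ->
     (closure_at_infinity l a b <->
      (b != 0 /\ exists2 k : nat, (k < l)%N &
                   a = b * ((l.-1)%:R - (2 * k)%:R))))
  /\ ~ @closure_at_infinity R l 1 0.
Proof.
split.
  move=> a b ab; rewrite -(M1 l ab); split; [exact: Fdir | exact: Bdir].
move/Fdir/(M1 l) => [].
  by apply/negP => /eqP [] /eqP; rewrite oner_eq0.
by rewrite eqxx.
Qed.
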